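(* Let $n\in\mathbb Z^+$, let $d,d'$ be cyclotomic patterns of index $n$, let $p$ be a prime with $p\equiv1\pmod n$, and let $f,g$ be the periodic sequences of length $p$ from $d$ and $d'$. Then $P_{f,g}(0)=\frac{p-1}{n}\langle d,d'\rangle=(p-1)\langle\hat d,\hat{d'}\rangle$, and for every $u\in\mathbb Z$, \[P_{f,g}(\alpha_p^u)=\sum_{j,k\in\mathbb Z/n\mathbb Z}(k,j)\,d_{j+u}\overline{d'_{k+u}}.\]
   Context: For each prime $p$, $\alpha_p$ is a fixed primitive element of $\mathbb F_p$ and, for $n\mid p-1$, $\mathbb F_p^{*n}$ is the subgroup of $n$th powers, with classes $\alpha_p^k\mathbb F_p^{*n}$ ($k\in\mathbb Z/n\mathbb Z$). The cyclotomic number $(j,k)$ over $\mathbb F_p$ is $|(1+\alpha_p^j\mathbb F_p^{*n})\cap\alpha_p^k\mathbb F_p^{*n}|$, where $1+S=\{1+b:b\in S\}$. A cyclotomic pattern of index $n$ is $d:\mathbb Z/n\mathbb Z\to\mathbb C$; the periodic sequence of length $p$ from $d$ has $f_0=0$, $f_h=d_k$ for $h\in\alpha_p^k\mathbb F_p^{*n}$. $P_{f,g}(s)=\sum_{j\in\mathbb Z/p\mathbb Z}f_{j+s}\overline{g_j}$. $\langle a,b\rangle=\sum a_j\overline{b_j}$, $\hat a_j=n^{-1}\sum_k\exp(-2\pi ijk/n)a_k$. *)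

(* Defs.v *)
From HB Require Import structures.
From mathcomp Require Import all_boot all_order all_algebra all_field.
From mathcomp Require Import complex.
From mathcomp Require Import reals trigo.
Set Implicit Arguments. Unset Strict Implicit. Unset Printing Implicit Defensive.
Import Order.TTheory GRing.Theory Num.Theory.
Local Open Scope ring_scope.

(* Throughout, the index n of the paper is written m.+1 (so n >= 1 holds by
   construction and Z/nZ is the zmodType 'I_m.+1). *)

Definition zn (m : nat) (u : int) : 'I_m.+1 := inord `|(u %% (m.+1)%:Z)%Z|%N.

Definition cyc_class (p n : nat) (alpha : 'F_p) (k : nat) : {set 'F_p} :=
  [set alpha ^+ k * b ^+ n | b in [set b : 'F_p | b != 0]].

Definition cyc_number (p m : nat) (alpha : 'F_p) (j k : 'I_m.+1) : nat :=
  #|[set 1 + x | x in cyc_class m.+1 alpha j] :&: cyc_class m.+1 alpha k|.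

Definition pattern_seq (R : rcfType) (p m : nat) (alpha : 'F_p)
    (d : 'I_m.+1 -> R[i]) (h : 'F_p) : R[i] :=
  if h == 0 then 0 else
  match [pick k : 'I_m.+1 | h \in cyc_class m.+1 alpha k] with
  | Some k => d k
  | None => 0
  end.

Definition crosscorr (R : rcfType) (p : nat) (f g : 'F_p -> R[i]) (s : 'F_p)
    : R[i] := \sum_(j : 'F_p) f (j + s) * (g j)^*.

Definition inner (R : rcfType) (m : nat) (a b : 'I_m.+1 -> R[i]) : R[i] :=
  \sum_(j : 'I_m.+1) a j * (b j)^*.

Definition omega (R : realType) (n : nat) : R[i] :=
  Complex (cos (2 * pi / n%:R)) (- sin (2 * pi / n%:R)).

Definition dft (R : realType) (m : nat) (a : 'I_m.+1 -> R[i]) (j : 'I_m.+1)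
    : R[i] := (m.+1)%:R^-1 * \sum_(k : 'I_m.+1) omega R m.+1 ^+ (j * k) * a k.

(* Main.v *)
Require Import Defs.
From HB Require Import structures.
From mathcomp Require Import all_boot all_order all_algebra all_field.
From mathcomp Require Import complex.
From mathcomp Require Import reals trigo lra ring zify.
Import Order.TTheory GRing.Theory Num.Theory.
Local Open Scope ring_scope.

Section Omega.
Variable R : realType.
Variable n : nat.
Hypothesis n_gt0 : (0 < n)%N.

Let th : R := 2 * pi / n%:R.

Lemma omega_exp k : omega R n ^+ k = Complex (cos (k%:R * th)) (- sin (k%:R * th)).
Proof.
elim: k => [|k IH].
  by rewrite expr0 mul0r cos0 sin0 oppr0.
rewrite exprS IH /omega -/th.
rewrite -[(_ +i* _)%C * (_ +i* _)%C]/(_ +i* _)%C.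
rewrite -addn1 natrD mulrDl mul1r cosD sinD.
congr Complex.
  by ring.
by ring.
Qed.

Lemma cos_lt1 (x : R) : 0 < x < pi *+ 2 -> cos x < 1.
Proof.
move=> /andP[x0 x2].
have -> : x = (x / 2) *+ 2 by rewrite -mulr_natr mulfVK // pnatr_eq0.
rewrite cos_mulr2n cos2sin2.
have : 0 < sin (x / 2).
  apply: sin_gt0_pi; rewrite divr_gt0 //=.
  by rewrite ltr_pdivrMr // mulr_natr.
move=> s0.
have : 0 < sin (x / 2) ^+ 2 by rewrite exprn_gt0.
set s := sin _ ^+ 2 => hs.
rewrite mulrnBl mulr2n; lra.
Qed.

Lemma omega_prim : n.-primitive_root (omega R n).
Proof.
rewrite /primitive_root_of_unity n_gt0 /=; apply/forallP => i.
rewrite unity_rootE omega_exp.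
case: (eqVneq i.+1 n) => [e|ne].
  have -> : (i.+1%:R : R) = n%:R by rewrite e.
  rewrite /th mulrCA mulfV ?pnatr_eq0 -?lt0n // mulr1 mulr_natl.
  by rewrite cos2pi sin2pi oppr0 eqb_id; apply/eqP.
rewrite eqbF_neg; apply/eqP => /(congr1 (@complex.Re _)) /= hc.
have : cos (i.+1%:R * th) < 1.
  apply: cos_lt1; rewrite /th.
  have n0 : (0 : R) < n%:R by rewrite ltr0n.
  have ilt : (i.+1 < n)%N by rewrite ltn_neqAle ne ltn_ord.
  apply/andP; split.
    by rewrite mulr_gt0 ?ltr0n // divr_gt0 ?mulr_gt0 ?pi_gt0 ?ltr0n.
  rewrite mulrA ltr_pdivrMr // -(mulr_natl pi 2) [X in _ < X]mulrC.
  by rewrite ltr_pM2r ?mulr_gt0 ?pi_gt0 ?ltr0n // ltr_nat.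
have hc' : cos (i.+1%:R * th) = 1 by exact: hc.
by rewrite hc' ltxx.
Qed.

Lemma omega_conj : (omega R n)^* = omega R n ^+ n.-1.
Proof.
set w := omega R n.
have wn : w ^+ n = 1 := prim_expr_order omega_prim.
have nw : `|w| = 1.
  apply/eqP; rewrite -(pexpr_eq1 n_gt0) ?normr_ge0 // -normrX wn normr1 //.
have w0 : w != 0.
  by apply/eqP => w0; move: wn; rewrite w0 expr0n (gtn_eqF n_gt0) => /esym/eqP; rewrite oner_eq0.
apply: (mulIf w0); rewrite -normCKC nw expr1n -exprSr prednK //.
Qed.

Lemma omega_orth (k l : nat) : (k < n)%N -> (l < n)%N ->
  \sum_(j < n) omega R n ^+ (j * k) * (omega R n ^+ (j * l))^* =
  n%:R * (k == l)%:R.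
Proof.
move=> kn ln; set w := omega R n.
have wn : w ^+ n = 1 := prim_expr_order omega_prim.
set t := (k + n.-1 * l)%N.
have E : forall j : 'I_n, w ^+ (j * k) * (w ^+ (j * l))^* = (w ^+ t) ^+ j.
  move=> j; rewrite rmorphXn /= omega_conj -!exprM -exprD; congr (_ ^+ _).
  by rewrite /t; ring.
under eq_bigr => j _ do rewrite E.
have tE : (w ^+ t == 1) = (k == l).
  rewrite -(expr0 w) (eq_prim_root_expr omega_prim) /t mod0n.
  have -> : ((k + n.-1 * l) %% n == 0)%N = (k + n.-1 * l == 0 %[mod n])%N.
    by rewrite mod0n.
  rewrite -(eqn_modDr l) add0n -addnA.
  have -> : (n.-1 * l + l = l * n)%N.
    by rewrite -{2}[l]mul1n -mulnDl addn1 prednK // mulnC.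
  by rewrite addnC modnMDl !modn_small.
case: (eqVneq k l) => [kl|kl].
  move: tE; rewrite kl eqxx => /eqP ->.
  by rewrite mulr1 (eq_bigr (fun _ => 1)) ?sumr_const ?card_ord // => j _; rewrite expr1n.
rewrite mulr0; move: tE; rewrite (negbTE kl) => /negbT tE.
have := subrX1 (w ^+ t) n.
rewrite -exprM mulnC exprM wn expr1n subrr => /esym /eqP.
by rewrite mulf_eq0 subr_eq0 (negbTE tE) /= => /eqP.
Qed.
End Omega.

Lemma sum_mod (V : nmodType) (n Q : nat) (F : nat -> V) :
  \sum_(0 <= e < Q * n) F (e %% n)%N = (\sum_(0 <= k < n) F k) *+ Q.
Proof.
elim: Q => [|Q IH]; first by rewrite mul0n big_geq // mulr0n.
rewrite mulSnr (@big_cat_nat _ _ _ (Q * n)) ?leq_addr // IH mulrSr.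
congr (_ + _).
rewrite -{1}[(Q * n)%N]add0n big_addn addKn.
apply: eq_big_nat => i /andP [_ hi].
by rewrite addnC modnMDl modn_small.
Qed.

Section FF.
Variables (p m : nat).
Hypothesis p_prime : prime p.
Hypothesis p_mod : (p = 1 %[mod m.+1])%N.
Variable alpha : 'F_p.
Hypothesis alpha_prim : (p.-1)%N.-primitive_root alpha.

Local Notation N := (p.-1)%N.
Local Notation n := m.+1.

Lemma N_gt0 : (0 < N)%N.
Proof. exact: prim_order_gt0 alpha_prim. Qed.

Lemma n_dvd_N : (n %| N)%N.
Proof.
have p1 : (1 <= p)%N by rewrite ltnW // prime_gt1.
by rewrite -subn1 -eqn_mod_dvd // p_mod.
Qed.

Lemma alpha_neq0 : alpha != 0.
Proof.
apply/eqP => a0; have := prim_expr_order alpha_prim.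
by rewrite a0 expr0n (gtn_eqF N_gt0) => /esym/eqP; rewrite oner_eq0.
Qed.

Lemma alpha_expN : alpha ^+ N = 1.
Proof. exact: prim_expr_order. Qed.

Lemma alpha_inj : injective (fun e : 'I_N => alpha ^+ e).
Proof.
move=> i j /eqP; rewrite (eq_prim_root_expr alpha_prim) !modn_small //.
by move/eqP/val_inj.
Qed.

Definition Aset : {set 'F_p} := [set alpha ^+ (e : 'I_N) | e in 'I_N].

Lemma Aset_eq : Aset = [set~ 0].
Proof.
apply/setP; apply/subset_cardP.
  by rewrite card_imset ?card_ord ?cardsC1 ?card_Fp //; exact: alpha_inj.
apply/subsetP => x /imsetP [e _ ->]; rewrite !inE expf_neq0 //.
exact: alpha_neq0.
Qed.

Lemma dlog_ex x : x != 0 -> exists e : 'I_N, alpha ^+ e == x.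
Proof.
move=> x0; have : x \in Aset by rewrite Aset_eq !inE.
by case/imsetP => e _ ->; exists e.
Qed.

Definition dlog (x : 'F_p) : nat :=
  if [pick e : 'I_N | alpha ^+ e == x] is Some e then val e else 0%N.

Lemma dlog_lt x : (dlog x < N)%N.
Proof. by rewrite /dlog; case: pickP => [e _|_]; [exact: ltn_ord | exact: N_gt0]. Qed.

Lemma dlogK x : x != 0 -> alpha ^+ dlog x = x.
Proof.
move=> x0; rewrite /dlog; case: pickP => [e /eqP //|H].
by have [e] := dlog_ex _ x0; rewrite H.
Qed.

Lemma dlog_exp e : dlog (alpha ^+ e) = (e %% N)%N.
Proof.
have /eqP := dlogK _ (expf_neq0 e alpha_neq0).
by rewrite (eq_prim_root_expr alpha_prim) modn_small ?dlog_lt // => /eqP.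
Qed.

Definition cls (x : 'F_p) : 'I_n := inord (dlog x %% n).

Lemma cls_exp e : cls (alpha ^+ e) = inord (e %% n).
Proof. by rewrite /cls dlog_exp (modn_dvdm _ n_dvd_N). Qed.

Lemma mem_class x (k : 'I_n) :
  (x \in cyc_class n alpha k) = (x != 0) && (cls x == k).
Proof.
apply/imsetP/andP => [[b] | [x0 /eqP ck]].
  rewrite inE => b0 ->; split.
    by rewrite mulf_neq0 ?expf_neq0 ?alpha_neq0.
  rewrite -(dlogK _ b0) -exprM -exprD cls_exp.
  by apply/eqP/val_inj; rewrite /= inordK ?ltn_mod // addnC modnMDl modn_small.
exists (alpha ^+ (dlog x %/ n)); first by rewrite inE expf_neq0 ?alpha_neq0.
rewrite -exprM -exprD.
have -> : (k + dlog x %/ n * n)%N = dlog x.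
  by rewrite -ck /cls inordK ?ltn_mod // addnC -divn_eq.
by rewrite dlogK.
Qed.

Lemma pattern_seqE (R : rcfType) (d : 'I_n -> R[i]) x :
  pattern_seq alpha d x = if x == 0 then 0 else d (cls x).
Proof.
rewrite /pattern_seq; case: eqP => // /eqP x0.
case: pickP => [k | H].
  by rewrite mem_class x0 /= => /eqP ->.
by have := H (cls x); rewrite mem_class x0 eqxx.
Qed.


Lemma sum_nonzero (V : nmodType) (h : 'F_p -> V) :
  \sum_(x : 'F_p | x != 0) h x = \sum_(e < N) h (alpha ^+ e).
Proof.
have -> : \sum_(x : 'F_p | x != 0) h x = \sum_(x in Aset) h x.
  by apply: eq_bigl => x; rewrite Aset_eq !inE.
rewrite big_imset; last by move=> i j _ _; exact: alpha_inj.
by apply: eq_bigl => i.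
Qed.

Lemma alphaz_nat (u : int) : exists r : nat,
  alpha ^ u = alpha ^+ r /\ (r %% n)%N = `|(u %% n%:Z)%Z|%N.
Proof.
exists `|(u %% N%:Z)%Z|%N.
have Nz : (N%:Z != 0) by rewrite eqz_nat -lt0n N_gt0.
have r0 : (`|(u %% N%:Z)%Z|%N : int) = (u %% N%:Z)%Z by rewrite gez0_abs // modz_ge0.
split.
  rewrite {1}(divz_eq u N%:Z) expfzDr ?alpha_neq0 // -exprz_exp exprzAC.
  have -> : alpha ^ (N%:Z) = 1 by exact: alpha_expN.
  by rewrite exp1rz mul1r -r0.
have NE : N%:Z = ((N %/ n)%N%:Z * n%:Z)%R by rewrite -PoszM divnK // n_dvd_N.
have -> : (u %% n%:Z)%Z = ((u %% N%:Z)%Z %% n%:Z)%Z.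
  by rewrite {1}(divz_eq u N%:Z) NE mulrA modzMDl.
by rewrite -r0 modz_nat absz_nat.
Qed.


Lemma ordD_val (a b : 'I_n) : val (a + b) = ((val a + val b) %% n)%N.
Proof. by []. Qed.

Lemma cls_mulz (u : int) z : z != 0 -> cls (alpha ^ u * z) = cls z + zn m u.
Proof.
move=> z0; have [r [-> hr]] := alphaz_nat u.
rewrite -{1}(dlogK _ z0) -exprD cls_exp; apply/val_inj.
rewrite ordD_val /cls /zn /= !inordK ?ltn_mod //; last first.
  by rewrite -hr ltn_mod.
by rewrite -hr modnDm addnC.
Qed.

End FF.

Lemma dft_inner (R : realType) (m : nat) (d d' : 'I_m.+1 -> R[i]) :
  inner (dft d) (dft d') = (m.+1)%:R^-1 * inner d d'.
Proof.
set n := m.+1; set c : R[i] := n%:R^-1.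
have cc : c^* = c by rewrite /c fmorphV /= rmorph_nat.
have n0 : (n%:R : R[i]) != 0 by rewrite pnatr_eq0.
rewrite /inner /dft -/n -/c.
transitivity (c * c * \sum_(j < n) \sum_(k < n) \sum_(l < n)
   (omega R n ^+ (j * k) * d k) * (omega R n ^+ (j * l) * d' l)^*).
  rewrite mulr_sumr; apply: eq_bigr => j _.
  rewrite rmorphM /= cc rmorph_sum /= mulrACA mulr_suml; congr (_ * _).
  by apply: eq_bigr => k _; rewrite mulr_sumr.
rewrite exchange_big /=.
under eq_bigr => k _ do rewrite exchange_big /=.
have X : forall k l : 'I_n, \sum_(i < n) omega R n ^+ (i * k) * d k *
     (omega R n ^+ (i * l) * d' l)^* = d k * (d' l)^* * (n%:R * (k == l)%:R).
  move=> k l; rewrite -(@omega_orth R n (ltn0Sn m) k l (ltn_ord k) (ltn_ord l)).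
  rewrite mulr_sumr; apply: eq_bigr => i _; rewrite rmorphM /=.
  by rewrite mulrACA mulrC.
have Y : forall k : 'I_n, \sum_(l < n) \sum_(i < n) omega R n ^+ (i * k) * d k *
     (omega R n ^+ (i * l) * d' l)^* = n%:R * (d k * (d' k)^*).
  move=> k; rewrite (bigD1 k) //= X eqxx mulr1 big1 ?addr0 1?mulrC // => l lk.
  by rewrite X eq_sym (negbTE lk) mulr0 mulr0.
under eq_bigr => k _ do rewrite Y.
rewrite -mulr_sumr mulrA.
have -> : c * c * n%:R = c by rewrite -mulrA /c mulVf ?mulr1.
by [].
Qed.


Lemma sum_ind (V : pzSemiRingType) (T : finType) (P : pred T) :
  \sum_(y : T) ((P y)%:R : V) = #|P|%:R.
Proof.
rewrite (bigID P) /= [X in _ + X]big1 ?addr0 => [|y /negbTE -> //].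
rewrite (eq_bigr (fun _ => 1)) => [|y -> //].
by rewrite sumr_const.
Qed.

Lemma pick2 (V : pzSemiRingType) (T : finType) (a b : T) (B : bool)
  (G : T -> T -> V) :
  B%:R * G a b = \sum_(j : T) \sum_(k : T) (B && (j == a) && (k == b))%:R * G j k.
Proof.
rewrite (bigD1 a) //= [X in _ + X]big1 ?addr0 => [|j ja]; last first.
  by rewrite big1 // => k _; rewrite (negbTE ja) andbF /= mul0r.
rewrite (bigD1 b) //= [X in _ + X]big1 ?addr0 => [|k kb]; last first.
  by rewrite (negbTE kb) andbF /= mul0r.
by rewrite !eqxx !andbT.
Qed.

Theorem mainTheorem18 (R : realType) (m : nat) (d d' : 'I_m.+1 -> R[i])
    (p : nat) (p_prime : prime p) (p_mod : (p = 1 %[mod m.+1])%N)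
    (alpha : 'F_p) (alpha_prim : (p.-1)%N.-primitive_root alpha) :
  let f := pattern_seq alpha d in
  let g := pattern_seq alpha d' in
  crosscorr f g 0 = ((p.-1)%:R / (m.+1)%:R) * inner d d' /\
  crosscorr f g 0 = (p.-1)%:R * inner (dft d) (dft d') /\
  forall u : int,
    crosscorr f g (alpha ^ u) =
    \sum_(j : 'I_m.+1) \sum_(k : 'I_m.+1)
      (cyc_number alpha k j)%:R * d (j + zn m u) * (d' (k + zn m u))^*.
Proof.
move=> f g.
set n := m.+1.
set C := cls p m alpha.
have PE : forall (d0 : 'I_n -> R[i]) x,
    pattern_seq alpha d0 x = if x == 0 then 0 else d0 (C x).
  by move=> d0 x; rewrite (pattern_seqE p m p_prime p_mod alpha alpha_prim).
have a0 := alpha_neq0 p alpha alpha_prim.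
have nN := n_dvd_N p m p_prime p_mod.
have n0 : (n%:R : R[i]) != 0 by rewrite pnatr_eq0.
have S0 : crosscorr f g 0 = \sum_(x | x != 0) d (C x) * (d' (C x))^*.
  rewrite /crosscorr [RHS]big_mkcond; apply: eq_bigr => x _.
  rewrite addr0 /f /g !PE; case: eqP => //= _; by rewrite mul0r.
have S1 : crosscorr f g 0 = ((p.-1 %/ n)%N%:R) * inner d d'.
  rewrite S0 (sum_nonzero p p_prime alpha alpha_prim) /C.
  under eq_bigr => e _ do rewrite (cls_exp p m p_prime p_mod alpha alpha_prim).
  rewrite -(big_mkord xpredT (fun e => d (inord (e %% n)) * (d' (inord (e %% n)))^*)).
  rewrite -[in LHS](divnK nN) (sum_mod _ _ _ (fun x => d (inord x) * (d' (inord x))^*)) -[in LHS]mulr_natl; congr (_ * _).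
  by rewrite big_mkord /inner; apply: eq_bigr => k _; rewrite inord_val.
have S1' : crosscorr f g 0 = ((p.-1)%:R / n%:R) * inner d d'.
  by rewrite S1 natf_div.
split; first exact: S1'.
split; first by rewrite S1' dft_inner mulrA.
move=> u.
set a := alpha ^ u.
have az : a != 0 by rewrite /a expfz_neq0.
set zu := zn m u.
pose G (j k : 'I_n) := d (j + zu) * (d' (k + zu))^*.
have CM : forall z, z != 0 -> C (a * z) = C z + zu.
  by move=> z z0; rewrite /C /a (cls_mulz p m p_prime p_mod alpha alpha_prim).
have T : forall y, f (a * y + a) * (g (a * y))^* =
    ((y != 0) && (1 + y != 0))%:R * G (C (1 + y)) (C y).
  move=> y; rewrite /f /g !PE.
  have -> : a * y + a = a * (1 + y) by rewrite mulrDr mulr1 addrC.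
  rewrite !mulf_eq0 (negbTE az) /=.
  case: (eqVneq y 0) => [->|y0] /=; first by rewrite ?eqxx /= ?rmorph0 ?mulr0 ?mul0r.
  case: (eqVneq (1 + y) 0) => [->|y1] /=; first by rewrite ?eqxx /= ?mul0r.
  by rewrite CM // CM // mul1r.
rewrite /crosscorr (reindex_inj (mulfI az)) /=.
under eq_bigr => y _ do rewrite T (pick2 _ _ (C (1 + y)) (C y)).
rewrite exchange_big /=; apply: eq_bigr => j _.
rewrite exchange_big /=; apply: eq_bigr => k _.
rewrite -mulr_suml sum_ind -mulrA; congr (_ * _).
congr (_%:R).
rewrite /cyc_number.
rewrite -(card_imset _ (addrI 1)).
apply: eq_card => z; rewrite !inE.
apply/idP/idP.
  case/imsetP => y /= /andP [/andP [/andP [y0 y1] /eqP jE] /eqP kE] ->.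
  rewrite (mem_class p m p_prime p_mod alpha alpha_prim) -/C y1 /= -jE eqxx andbT.
  apply/imsetP; exists y => //.
  by rewrite (mem_class p m p_prime p_mod alpha alpha_prim) -/C y0 kE eqxx.
case/andP => /imsetP [x xk ->] zj.
apply/imsetP; exists x => // /=.
move: xk zj; rewrite !(mem_class p m p_prime p_mod alpha alpha_prim).
rewrite /C; case/andP => x0 /eqP <-; case/andP => x1 /eqP <-.
by rewrite unfold_in /= x0 x1 !eqxx.
Qed.
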